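(* Let $\overrightarrow{W}$ be a Morse sequence on a simplicial complex $K$. Then for every $p$, $\overline O[p]=\{c\in K[p]:\overline\Phi_p(c)=c\}$ and $\underline O[p]=\{c\in K[p]:\underline\Phi_p(c)=c\}$.
   Context: A simplicial complex $K$ is a finite collection of non-empty finite sets closed under taking non-empty subsets; $\dim\sigma=|\sigma|-1$, $K^{(p)}$ the set of $p$-simplices. A pair $(\sigma,\tau)$ with $\sigma\subsetneq\tau$ is a free pair for $K$ if $\tau$ is the only simplex other than $\sigma$ containing $\sigma$; $K$ is then an elementary expansion of $K\setminus\{\sigma,\tau\}$. If $\nu$ is a facet (maximal simplex) of $K$, $K$ is an elementary filling of $K\setminus\{\nu\}$. A Morse sequence on $K$ is a sequence $\langle\emptyset=K_0,\dots,K_k=K\rangle$ with each $K_i$ an elementary expansion or filling of $K_{i-1}$; simplices added by fillings are critical; for an expansion $K_i=K_{i-1}\cup\{\sigma,\tau\}$, $\sigma\subset\tau$, $(\sigma,\tau)$ is a regular pair, $\sigma$ lower regular, $\tau$ upper regular. $\widehat W$ is the set of critical simplices. $K[p]$ is the $\mathbb{Z}_2$-vector space of subsets of $K^{(p)}$ (sum = symmetric difference, $0=\emptyset$), $\widehat W[p]=\{c\in K[p]:c\subseteq\widehat W\}$. For $\sigma\in K^{(p)}$, $\partial(\sigma)=\{\tau\in K^{(p-1)}:\tau\subset\sigma\}$, $\delta(\sigma)=\{\tau\in K^{(p+1)}:\sigma\subset\tau\}$, with linear extensions $\partial_p,\delta_p$. The reference map $\curlywedge$ is the unique map assigning to each $p$-simplex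 an element of $\widehat W[p]$, extended linearly, with $\curlywedge(\nu)=\{\nu\}$ for critical $\nu$ and $\curlywedge(\tau)=0=\curlywedge(\partial(\tau))$ for upper regular $\tau$; the coreference map $\curlyvee$ is the unique such map with $\curlyvee(\nu)=\{\nu\}$ for critical $\nu$ and $\curlyvee(\sigma)=0=\curlyvee(\delta(\sigma))$ for lower regular $\sigma$. Extension maps: $\widetilde\curlywedge_p,\widetilde\curlyvee_p:\widehat W[p]\to K[p]$ linear with $\widetilde\curlywedge(\kappa)=\{\nu\in K:\kappa\in\curlyvee(\nu)\}$, $\widetilde\curlyvee(\kappa)=\{\nu\in K:\kappa\in\curlywedge(\nu)\}$ for critical $\kappa$; $\overline O[p]=\operatorname{im}\widetilde\curlywedge_p$, $\underline O[p]=\operatorname{im}\widetilde\curlyvee_p$. Let $V_p:K[p]\to K[p+1]$ and $V^*_p:K[p]\to K[p-1]$ be the linear maps with $V(\kappa)=V^*(\kappa)=0$ for critical $\kappa$, and $V(\sigma)=\tau$, $V(\tau)=0$, $V^*(\sigma)=0$, $V^*(\tau)=\sigma$ for each regular pair $(\sigma,\tau)$. The flow and coflow are the linear maps $\Phi_p(\nu)=\nu+\partial_{p+1}(V_p(\nu))+V_{p-1}(\partial_p(\nu))$ and $\Phi^*_p(\nu)=\nu+\delta_{p-1}(V^*_p(\nu))+V^*_{p+1}(\delta_p(\nu))$ for $\nu\in K^{(p)}$. For each $c\in K[p]$ there are $i,j\ge0$ with $\Phi^{i+1}(c)=\Phi^i(c)$ and $(\Phi^* )^{j+1}(c)=(\Phi^*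 )^j(c)$; $\overline\Phi_p(c)=\Phi^i(c)$ and $\underline\Phi_p(c)=(\Phi^* )^j(c)$. *)

(* Defs.v *)
(* Simplicial complexes over a finite vertex type V;
   simplices are {set V}, chains (elements of K[p]) are {set {set V}} with
   symmetric difference as Z_2-addition. *)
From mathcomp Require Import all_boot.
Set Implicit Arguments. Unset Strict Implicit. Unset Printing Implicit Defensive.

Section Morse.
Variable V : finType.
Notation simplex := {set V}.
Notation chain := {set {set V}}.

Definition is_complex (K : chain) : Prop :=
  set0 \notin K /\
  forall s t : simplex, s \in K -> t \subset s -> t != set0 -> t \in K.

(* K^(p) : the p-simplices of K  (dim s = |s| - 1) *)
Definition skel (K : chain) (p : nat) : chain := [set s in K | #|s| == p.+1].

Definition cadd (c d : chain) : chain := [set t | (t \in c) (+) (t \in d)].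

(* linear (Z_2) extension of a map defined on simplices *)
Definition lin (f : simplex -> chain) (c : chain) : chain :=
  [set t | odd #|[set s in c | t \in f s]|].

Definition bd (K : chain) (s : simplex) : chain :=
  [set t in K | (t \proper s) && (#|t|.+1 == #|s|)].
Definition cobd (K : chain) (s : simplex) : chain :=
  [set t in K | (s \proper t) && (#|s|.+1 == #|t|)].

Inductive step := Fill of simplex | Expand of simplex & simplex.

Definition added (st : step) : chain :=
  match st with Fill n => [set n] | Expand s t => [set s; t] end.

Definition Kpref (W : seq step) (i : nat) : chain :=
  \bigcup_(st <- take i W) added st.

Definition step_ok (Kprev Knext : chain) (st : step) : Prop :=
  is_complex Knext /\
  match st with
  | Fill n => n \notin Kprev /\
              (forall x, x \in Knext -> n \subset x -> x = n)
  | Expand s t => s \proper t /\ s \notin Kprev /\ t \notin Kprev /\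
              (forall x, x \in Knext -> s \subset x -> x = s \/ x = t)
  end.

Definition morse_seq (K : chain) (W : seq step) : Prop :=
  (forall i, i < size W ->
     step_ok (Kpref W i) (Kpref W i.+1) (nth (Fill set0) W i)) /\
  Kpref W (size W) = K.

Definition crit (W : seq step) : chain :=
  \bigcup_(st <- W) (if st is Fill n then [set n] else set0).
Definition lower_reg (W : seq step) (s : simplex) : bool :=
  has (fun st => if st is Expand a _ then a == s else false) W.
Definition upper_reg (W : seq step) (t : simplex) : bool :=
  has (fun st => if st is Expand _ b then b == t else false) W.

Definition Vmap (W : seq step) (s : simplex) : chain :=
  \bigcup_(st <- W) (if st is Expand a b then (if a == s then [set b] else set0)
                     else set0).
Definition Vstar (W : seq step) (t : simplex) : chain :=
  \bigcup_(st <- W) (if st is Expand a b then (if b == t then [set a] else set0)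
                     else set0).

Definition flow (K : chain) (W : seq step) (c : chain) : chain :=
  lin (fun n => cadd (cadd [set n] (lin (bd K) (Vmap W n)))
                     (lin (Vmap W) (bd K n))) c.
Definition coflow (K : chain) (W : seq step) (c : chain) : chain :=
  lin (fun n => cadd (cadd [set n] (lin (cobd K) (Vstar W n)))
                     (lin (Vstar W) (cobd K n))) c.

Definition stab (F : chain -> chain) (c d : chain) : Prop :=
  exists i, iter i.+1 F c = iter i F c /\ iter i F c = d.

(* characterization of the reference map (the unique such map) *)
Definition is_reference (K : chain) (W : seq step) (f : simplex -> chain) : Prop :=
  (forall s, s \in K -> f s \subset crit W :&: skel K (#|s|.-1)) /\
  (forall n, n \in crit W -> f n = [set n]) /\
  (forall t, t \in K -> upper_reg W t -> f t = set0 /\ lin f (bd K t) = set0).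

(* characterization of the coreference map (the unique such map) *)
Definition is_coreference (K : chain) (W : seq step) (g : simplex -> chain) : Prop :=
  (forall s, s \in K -> g s \subset crit W :&: skel K (#|s|.-1)) /\
  (forall n, n \in crit W -> g n = [set n]) /\
  (forall s, s \in K -> lower_reg W s -> g s = set0 /\ lin g (cobd K s) = set0).

Definition ext_up (K : chain) (g : simplex -> chain) (k : simplex) : chain :=
  [set n in K | k \in g n].
Definition ext_down (K : chain) (f : simplex -> chain) (k : simplex) : chain :=
  [set n in K | k \in f n].

Definition Obar (K : chain) (W : seq step) (g : simplex -> chain) (p : nat)
  (c : chain) : Prop :=
  exists2 d : chain, d \subset crit W :&: skel K p & lin (ext_up K g) d = c.
Definition Ounder (K : chain) (W : seq step) (f : simplex -> chain) (p : nat)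
  (c : chain) : Prop :=
  exists2 d : chain, d \subset crit W :&: skel K p & lin (ext_down K f) d = c.

End Morse.

(* Main.v *)
Require Import Defs.
From mathcomp Require Import all_boot zify.
Set Implicit Arguments. Unset Strict Implicit. Unset Printing Implicit Defensive.


Section Lin.
Variable V : finType.
Notation simplex := {set V}.
Notation chain := {set {set V}}.

Lemma oddcardE (c : chain) (P : pred simplex) :
  odd #|[set s in c | P s]| = \big[addb/false]_(s in c) P s.
Proof.
rewrite -sum1_card.
rewrite (eq_bigl (fun s => (s \in c) && P s)); last by move=> s; rewrite inE.
rewrite big_mkcondr /= (big_morph odd oddD (erefl : odd 0 = false)).
by apply: eq_bigr => s _; case: (P s).
Qed.

Lemma in_lin (F : simplex -> chain) (c : chain) t :
  (t \in lin F c) = \big[addb/false]_(s in c) (t \in F s).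
Proof. by rewrite inE oddcardE. Qed.

Lemma xor_uniq (c : chain) (P : pred simplex) u :
  (forall s, s \in c -> P s -> s = u) ->
  \big[addb/false]_(s in c) P s = (u \in c) && P u.
Proof.
move=> H; case: (boolP ((u \in c) && P u)) => [/andP [uc Pu]|nu].
  rewrite (bigD1 u) //= Pu big1 // => s /andP [sc su].
  by apply/negP => Ps; move/eqP: su; apply; apply: H.
apply: big1 => s sc; apply/negP => Ps.
by move: nu; rewrite -(H s sc Ps) sc Ps.
Qed.

Lemma xor_ex (c : chain) (P : pred simplex) :
  \big[addb/false]_(s in c) P s -> exists2 s, s \in c & P s.
Proof.
move=> H; case: (boolP [exists s, (s \in c) && P s]) => [/existsP [s /andP [sc Ps]]|/existsPn nx].
  by exists s.
by move: H; rewrite big1 // => s sc; move: (nx s); rewrite sc /= => /negbTE.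
Qed.

Lemma lin_cadd_fun (A B : simplex -> chain) (c : chain) :
  lin (fun n => cadd (A n) (B n)) c = cadd (lin A c) (lin B c).
Proof.
apply/setP => t; rewrite [in RHS]inE !in_lin -big_split /=.
by apply: eq_bigr => s _; rewrite inE.
Qed.

Lemma lin_cadd_arg (F : simplex -> chain) (c d : chain) :
  lin F (cadd c d) = cadd (lin F c) (lin F d).
Proof.
apply/setP => t; rewrite [in RHS]inE !in_lin.
rewrite (big_mkcond (fun s => s \in cadd c d)) (big_mkcond (fun s => s \in c)).
rewrite (big_mkcond (fun s => s \in d)) -big_split /=.
apply: eq_bigr => s _; rewrite inE.
by case: (s \in c); case: (s \in d); case: (t \in F s).
Qed.

Lemma lin_id (c : chain) : lin (fun n => [set n]) c = c.
Proof.
apply/setP => t; rewrite in_lin (xor_uniq (u := t)).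
  by rewrite inE eqxx andbT.
by move=> s _; rewrite inE => /eqP.
Qed.

Lemma lin_set1 (F : simplex -> chain) x : lin F [set x] = F x.
Proof.
apply/setP => t; rewrite in_lin (xor_uniq (u := x)).
  by rewrite inE eqxx.
by move=> s; rewrite inE => /eqP.
Qed.

Lemma lin_set0 (F : simplex -> chain) : lin F set0 = set0.
Proof.
by apply/setP => t; rewrite in_lin big_pred0 ?inE // => s; rewrite inE.
Qed.

Lemma lin_fun0 (F : simplex -> chain) (c : chain) :
  (forall s, s \in c -> F s = set0) -> lin F c = set0.
Proof.
move=> H; apply/setP => t; rewrite in_lin inE big1 // => s sc.
by rewrite H // inE.
Qed.


Lemma cadd0 (c : chain) : cadd c set0 = c.
Proof. by apply/setP => t; rewrite !inE addbF. Qed.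

Lemma stabE (F : chain -> chain) c : stab F c c <-> F c = c.
Proof.
split; first by move=> [i [H1 H2]]; move: H1; rewrite iterS H2.
by move=> H; exists 0.
Qed.

End Lin.
Lemma lin_comp (V : finType) (F G : {set V} -> {set {set V}}) (c : {set {set V}}) :
  lin G (lin F c) = lin (fun n => lin G (F n)) c.
Proof.
apply/setP => t; rewrite !in_lin.
rewrite big_mkcond /=.
transitivity (\big[addb/false]_u \big[addb/false]_(s in c) ((u \in F s) && (t \in G u))).
  apply: eq_bigr => u _; rewrite in_lin -big_distrl /=.
  by case: (\big[addb/false]_(s in c) _); case: (t \in G u).
rewrite exchange_big /=; apply: eq_big => // s _.
rewrite in_lin [RHS]big_mkcond /=; apply: eq_bigr => u _.
by case: (u \in F s).
Qed.

Definition Flow (V : finType) (B Vf : {set V} -> {set {set V}}) (c : {set {set V}}) :=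
  lin (fun n => cadd (cadd [set n] (lin B (Vf n))) (lin Vf (B n))) c.

Section Abstract.
Variable V : finType.
Notation simplex := {set V}.
Notation chain := {set {set V}}.
Variables (K crt : chain) (B C Vf : simplex -> chain) (Lp Up : pred simplex)
  (r : simplex -> nat) (g : simplex -> chain).
Hypothesis HBK : forall x y, y \in B x -> y \in K.
Hypothesis HCK : forall x y, y \in C x -> y \in K.
Hypothesis HBC : forall x y, x \in K -> y \in K -> (y \in B x) = (x \in C y).
Hypothesis HP1 : forall s t, t \in Vf s ->
  [/\ s \in K, t \in K, Lp s, Up t & s \in B t].
Hypothesis HP1r : forall s t, t \in Vf s -> r s = r t.
Hypothesis HPL : forall s, s \in K -> Lp s -> exists t, t \in Vf s.
Hypothesis HPU : forall t, t \in K -> Up t -> exists s, t \in Vf s.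
Hypothesis HPf : forall s t t', t \in Vf s -> t' \in Vf s -> t = t'.
Hypothesis HPi : forall s s' t, t \in Vf s -> t \in Vf s' -> s = s'.
Hypothesis Hpart : forall x, x \in K -> [|| x \in crt, Lp x | Up x].
Hypothesis Hdisj : forall x, x \in K -> Lp x -> Up x -> False.
Hypothesis HcrtK : forall x, x \in crt -> x \in K.
Hypothesis Hrank : forall x y, x \in K -> y \in B x ->
  r y <= r x /\ (r y = r x -> x \in Vf y).
Hypothesis H0K : set0 \notin K.
Hypothesis HG1 : forall s, s \in K -> g s \subset crt :&: skel K (#|s|.-1).
Hypothesis HG2 : forall n, n \in crt -> g n = [set n].
Hypothesis HG3 : forall s, s \in K -> Lp s -> g s = set0 /\ lin g (C s) = set0.

Lemma FlowE (c : chain) : Flow B Vf c = cadd (cadd c (lin B (lin Vf c))) (lin Vf (lin B c)).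
Proof.
by rewrite /Flow !lin_cadd_fun lin_id -(lin_comp Vf B c) -(lin_comp B Vf c).
Qed.

Lemma linV_mem (d : chain) s t : s \in d -> t \in Vf s -> t \in lin Vf d.
Proof.
move=> sd ts; rewrite in_lin (xor_uniq (u := s)) ?sd ?ts //.
by move=> s' _ ts'; apply: HPi ts' ts.
Qed.

Lemma linV_inv (d : chain) t : t \in lin Vf d -> exists2 s, s \in d & t \in Vf s.
Proof. by rewrite in_lin => /xor_ex. Qed.

Lemma linV0 (d : chain) : (forall s, s \in d -> ~~ Lp s) -> lin Vf d = set0.
Proof.
move=> H; apply: lin_fun0 => s sd; apply/setP => t; rewrite inE.
apply/negP => ts; have [_ _ Ls _ _] := HP1 ts.
by move: (H s sd); rewrite Ls.
Qed.

Definition goodc (c : chain) :=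
  (forall s, s \in c -> ~~ Lp s) /\ (forall s, s \in lin B c -> ~~ Lp s).

Lemma flow_fix (c : chain) : {subset c <= K} -> Flow B Vf c = c <-> goodc c.
Proof.
move=> cK; split; last first.
  move=> [H1 H2]; rewrite FlowE linV0 // lin_set0 (linV0 H2).
  by rewrite !cadd0.
rewrite FlowE => /setP HF.
have E : lin B (lin Vf c) = lin Vf (lin B c).
  apply/setP => t; move: (HF t); rewrite !inE.
  by case: (t \in c); case: (odd _); case: (odd _).
have H1 : forall s, s \in c -> ~~ Lp s.
  move=> s0 s0c; apply/negP => Ls0.
  set A := [pred s | (s \in c) && Lp s].
  have As0 : A s0 by rewrite /A /= s0c.
  case: (arg_maxnP r As0) => sig /andP [sigc Lsig] Hmax.
  have sigK := cK _ sigc.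
  have [tau tt] := HPL sigK Lsig.
  have [_ tauK _ Utau sigB] := HP1 tt.
  have : sig \in lin B (lin Vf c).
    rewrite in_lin (xor_uniq (u := tau)).
      by rewrite sigB (linV_mem sigc tt).
    move=> u /linV_inv [s sc us] sBu.
    have [sK uK Ls _ _] := HP1 us.
    have rsu := HP1r us.
    have [le1 eq1] := Hrank uK sBu.
    have le2 : r s <= r sig by apply: Hmax; rewrite /A /= sc Ls.
    have : r sig = r u by apply/eqP; rewrite eqn_leq le1 -rsu le2.
    by move/eq1 => usig; apply: HPf usig tt.
  rewrite E => /linV_inv [s _ /HP1 [_ _ _ Usig _]].
  by apply: Hdisj Lsig Usig.
split => // s sB; apply/negP => Ls.
have sK : s \in K.
  by move: sB; rewrite in_lin => /xor_ex [u _]; apply: HBK.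
have [t ts] := HPL sK Ls.
have : t \in lin Vf (lin B c) by apply: linV_mem ts.
by rewrite -E (linV0 H1) lin_set0 inE.
Qed.


Lemma in_ext (d : chain) t :
  (t \in lin (ext_up K g) d) = (t \in K) && \big[addb/false]_(k in d) (k \in g t).
Proof.
rewrite in_lin; case: (boolP (t \in K)) => tK /=.
  by apply: eq_bigr => k _; rewrite inE tK.
by apply: big1 => k _; rewrite inE (negbTE tK).
Qed.

Lemma skelK (c : chain) p : c \subset skel K p -> {subset c <= K}.
Proof. by move=> /subsetP cs x /cs; rewrite inE => /andP []. Qed.

Lemma obar_fwd p (d : chain) : d \subset crt :&: skel K p ->
  lin (ext_up K g) d \subset skel K p /\ goodc (lin (ext_up K g) d).
Proof.
move=> /subsetP dS.
have cK : forall t, t \in lin (ext_up K g) d -> t \in K.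
  by move=> t; rewrite in_ext => /andP [].
split; [|split].
- apply/subsetP => t tc; have tK := cK _ tc.
  move: tc; rewrite in_ext tK /= => /xor_ex [k kd kg].
  move: (dS _ kd); rewrite !inE => /andP [_ /andP [_ /eqP kp]].
  move/subsetP: (HG1 tK) => /(_ _ kg); rewrite !inE => /andP [_ /andP [_ /eqP kt]].
  have t0 : 0 < #|t|.
    rewrite card_gt0; apply/negP => /eqP t0; move: tK; rewrite t0.
    by move/negP: H0K.
  by rewrite tK /= -(prednK t0) -kt kp.
- move=> t tc; have tK := cK _ tc; apply/negP => Lt.
  move: tc; rewrite in_ext tK /= (proj1 (HG3 tK Lt)) big1 // => k _.
  by rewrite inE.
- move=> s sB; apply/negP => Ls.
  have sK : s \in K.
    by move: sB; rewrite in_lin => /xor_ex [u _]; apply: HBK.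
  suff : \big[addb/false]_(u in lin (ext_up K g) d) (s \in B u) = false.
    by rewrite -in_lin sB.
  rewrite big_mkcond /=.
  transitivity (\big[addb/false]_u (if u \in C s then
       \big[addb/false]_(k in d) (k \in g u) else false)).
    apply: eq_bigr => u _.
    case: (boolP (u \in K)) => uK.
      rewrite in_ext uK /= -(HBC uK sK).
      by case: (s \in B u); case: (\big[addb/false]_(k in d) _).
    have -> : (u \in lin (ext_up K g) d) = false.
      by apply/negP => /cK; apply/negP.
    have -> // : (u \in C s) = false.
    by apply/negP => /HCK; apply/negP.
  rewrite -big_mkcond exchange_big /= big1 // => k _.
  by rewrite -in_lin (proj2 (HG3 sK Ls)) inE.
Qed.

Lemma uniq_up (e : chain) : {subset e <= K} -> (forall u, u \in e -> Up u) ->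
  (forall s, s \in lin B e -> ~~ Lp s) -> e = set0.
Proof.
move=> eK eU eB; apply/setP => u0; rewrite inE; apply/negP => u0e.
case: (arg_maxnP r u0e) => tau taue Hmax.
have tauK := eK _ taue.
have [sig tt] := HPU tauK (eU _ taue).
have [sigK _ Lsig _ sigB] := HP1 tt.
have rst := HP1r tt.
suff : sig \in lin B e by move/eB; rewrite Lsig.
rewrite in_lin (xor_uniq (u := tau)); first by rewrite sigB andbT; exact: taue.
move=> u ue sBu.
have [le1 eq1] := Hrank (eK _ ue) sBu.
have le2 := Hmax _ ue.
have : r sig = r u by apply/eqP; rewrite eqn_leq le1 rst; exact: le2.
by move/eq1 => usig; apply: HPf usig tt.
Qed.

Lemma obar_char p (c : chain) :
  (exists2 d : chain, d \subset crt :&: skel K p & lin (ext_up K g) d = c) <->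
  (c \subset skel K p /\ goodc c).
Proof.
split; first by move=> [d dS <-]; apply: obar_fwd dS.
move=> [cS [gc1 gc2]].
set d := c :&: crt.
have dS : d \subset crt :&: skel K p.
  apply/subsetP => k; rewrite !inE => /andP [kc kcrt].
  by rewrite kcrt; move/subsetP: cS => /(_ _ kc); rewrite inE.
exists d => //.
have [c'S [gc1' gc2']] := obar_fwd dS.
set c' := lin (ext_up K g) d in c'S gc1' gc2' *.
have cK := skelK cS; have c'K := skelK c'S.
suff : cadd c c' = set0.
  move/setP => H; apply/setP => t; have Ht := H t; rewrite /cadd in_set0 in_set in Ht; move: Ht.
  by case: (t \in c); case: (t \in c').
apply: uniq_up.
- by move=> u; rewrite inE; case: (boolP (u \in c)) => uc /=;
     [move=> _; apply: cK | apply: c'K].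
- move=> u ue.
  have uK : u \in K.
    by move: ue; rewrite inE; case: (boolP (u \in c)) => uc /=;
     [move=> _; apply: cK | apply: c'K].
  have ncrt : u \notin crt.
    apply/negP => ucrt; move: ue; rewrite inE.
    rewrite /c' in_ext uK /= (HG2 ucrt) (xor_uniq (u := u)).
      by rewrite /d !inE ucrt eqxx !andbT addbb.
    by move=> k _; rewrite inE => /eqP.
  have nL : ~~ Lp u.
    by move: ue; rewrite inE; case: (boolP (u \in c)) => uc /=;
      [move=> _; apply: gc1 | apply: gc1'].
  by move: (Hpart uK); rewrite (negbTE ncrt) (negbTE nL).
- move=> s; rewrite lin_cadd_arg inE.
  by case: (boolP (s \in lin B c)) => sc /=; [move=> _; apply: gc2 | apply: gc2'].
Qed.

Theorem abstract_main p (c : chain) :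
  (exists2 d : chain, d \subset crt :&: skel K p & lin (ext_up K g) d = c) <->
  (c \subset skel K p /\ stab (Flow B Vf) c c).
Proof.
split => [/obar_char [cS gc]|[cS st]]; first split => //.
  by apply/stabE; apply/flow_fix => //; apply: skelK cS.
by apply/obar_char; split => //; apply/(flow_fix (skelK cS)); apply/stabE.
Qed.

End Abstract.

Lemma mem_bigcup_seq (V : finType) (T : Type) (F : T -> {set {set V}}) s x :
  (x \in \bigcup_(i <- s) F i) = has (fun i => x \in F i) s.
Proof.
elim: s => [|y s IH]; first by rewrite big_nil inE.
by rewrite big_cons inE IH.
Qed.

Section Concrete.
Variable V : finType.
Notation simplex := {set V}.
Notation chain := {set {set V}}.
Variables (K : chain) (W : seq (step V)).
Hypothesis HM : morse_seq K W.

Definition idx (x : simplex) := find (fun st => x \in added st) W.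
Notation nthW j := (nth (Fill set0) W j).

Lemma memKpref x i : i <= size W -> (x \in Kpref W i) = (idx x < i).
Proof. by move=> h; rewrite /Kpref mem_bigcup_seq has_take_leq. Qed.

Lemma memK x : (x \in K) = (idx x < size W).
Proof. by rewrite -(proj2 HM) memKpref. Qed.

Lemma idx_le j x : x \in added (nthW j) -> idx x <= j.
Proof.
move=> xa; rewrite leqNgt; apply/negP => /(before_find (Fill set0)) /=.
by rewrite xa.
Qed.

Lemma idx_eq j x : j < size W -> x \in added (nthW j) -> idx x = j.
Proof.
move=> jlt xa; apply/eqP; rewrite eqn_leq idx_le //=.
have [_ ok] := (proj1 HM) j jlt.
move: xa ok; case: (nthW j) => [n|s t] /=.
  by rewrite inE => /eqP -> [nK _]; rewrite memKpref ?(ltnW jlt) -?leqNgt in nK.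
rewrite !inE => /orP [] /eqP -> [_ [sK [tK _]]].
  by rewrite memKpref ?(ltnW jlt) -?leqNgt in sK.
by rewrite memKpref ?(ltnW jlt) -?leqNgt in tK.
Qed.

Lemma nth_idx x : x \in K -> x \in added (nthW (idx x)).
Proof.
rewrite memK -has_find => h.
exact: (nth_find (Fill set0) h).
Qed.

Lemma complex_at x : x \in K -> is_complex (Kpref W (idx x).+1).
Proof. by rewrite memK => h; have [] := (proj1 HM) _ h. Qed.

Lemma set0K : set0 \notin K.
Proof.
apply/negP => h; have [c _] := complex_at h.
by move/negP: c; apply; rewrite memKpref // -memK.
Qed.

Definition PE s t := exists2 j, j < size W & nthW j = Expand s t.

Lemma has_nthE (a : pred (step V)) : has a W <-> exists2 j, j < size W & a (nthW j).
Proof. by split => /(has_nthP (Fill set0)). Qed.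

Lemma Vmap_mem s t : t \in Vmap W s <-> PE s t.
Proof.
rewrite /Vmap mem_bigcup_seq; split => [/has_nthE [j jlt]|[j jlt E]].
  case E: (nthW j) => [n|a b]; first by rewrite inE.
  by case: eqP => [<-|]; rewrite inE // => /eqP ->; exists j.
by apply/has_nthE; exists j => //; rewrite E eqxx inE.
Qed.

Lemma Vstar_mem s t : s \in Vstar W t <-> PE s t.
Proof.
rewrite /Vstar mem_bigcup_seq; split => [/has_nthE [j jlt]|[j jlt E]].
  case E: (nthW j) => [n|a b]; first by rewrite inE.
  by case: eqP => [<-|]; rewrite inE // => /eqP ->; exists j.
by apply/has_nthE; exists j => //; rewrite E eqxx inE.
Qed.

Lemma lower_mem s : lower_reg W s <-> exists t, PE s t.
Proof.
rewrite /lower_reg ; split => [/has_nthE [j jlt]|[t [j jlt E]]].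
  by case E: (nthW j) => [n|a b] //= /eqP <-; exists b, j.
by apply/has_nthE; exists j => //; rewrite E /=.
Qed.

Lemma upper_mem t : upper_reg W t <-> exists s, PE s t.
Proof.
rewrite /upper_reg ; split => [/has_nthE [j jlt]|[s [j jlt E]]].
  by case E: (nthW j) => [n|a b] //= /eqP <-; exists a, j.
by apply/has_nthE; exists j => //; rewrite E /=.
Qed.

Lemma crit_mem n : n \in crit W <-> exists2 j, j < size W & nthW j = Fill n.
Proof.
rewrite /crit mem_bigcup_seq; split => [/has_nthE [j jlt]|[j jlt E]].
  by case E: (nthW j) => [m|a b]; rewrite inE // => /eqP ->; exists j.
by apply/has_nthE; exists j => //; rewrite E inE.
Qed.

Lemma PE_idx s t j : j < size W -> nthW j = Expand s t -> idx s = j /\ idx t = j.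
Proof.
move=> jlt E; split; apply: idx_eq => //; rewrite E /= !inE eqxx ?orbT //.
Qed.

Lemma PE_K s t : PE s t -> s \in K /\ t \in K.
Proof.
move=> [j jlt E]; have [h1 h2] := PE_idx jlt E.
by rewrite !memK h1 h2.
Qed.

Lemma PE_uniq1 s t t' : PE s t -> PE s t' -> t = t'.
Proof.
move=> [j1 l1 E1] [j2 l2 E2].
have [h1 _] := PE_idx l1 E1; have [h2 _] := PE_idx l2 E2.
by move: E2; rewrite -h2 h1 E1 => [[]].
Qed.

Lemma PE_uniq2 s s' t : PE s t -> PE s' t -> s = s'.
Proof.
move=> [j1 l1 E1] [j2 l2 E2].
have [_ h1] := PE_idx l1 E1; have [_ h2] := PE_idx l2 E2.
by move: E2; rewrite -h2 h1 E1 => [[]].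
Qed.

Lemma PE_proper s t : PE s t -> s \proper t.
Proof.
by move=> [j jlt E]; have := (proj1 HM) j jlt; rewrite E => [[_ []]].
Qed.

Lemma PE_bd s t : PE s t -> s \in bd K t.
Proof.
move=> P; have [sK tK] := PE_K P; have := P; move=> [j jlt E].
have [_ ht] := PE_idx jlt E.
have ok := (proj1 HM) j jlt; rewrite E in ok; have [[_ cx] [spt [_ [_ free]]]] := ok.
have tK' : t \in Kpref W j.+1 by rewrite memKpref // ht.
have := spt; move/properP => [sst [v vt vs]].
have xt : v |: s \subset t by rewrite subUset sub1set vt sst.
have xK : v |: s \in Kpref W j.+1.
  by apply: cx tK' xt _; apply/set0Pn; exists v; rewrite !inE eqxx.
have [xs|xt'] := free _ xK (subsetUr _ _).
  by move: vs; rewrite -xs !inE eqxx.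
by rewrite inE sK spt /= -xt' cardsU1 vs.
Qed.

Lemma crit_K n : n \in crit W -> n \in K.
Proof.
move=> /crit_mem [j jlt E]; rewrite memK.
by apply: leq_ltn_trans jlt; apply: idx_le; rewrite E inE.
Qed.

Lemma part x : x \in K -> [|| x \in crit W, lower_reg W x | upper_reg W x].
Proof.
move=> xK; have := nth_idx xK; have := xK; rewrite memK => jlt.
case E: (nthW (idx x)) => [n|a b] /=.
  rewrite inE => /eqP xn; apply/orP; left; apply/crit_mem.
  by exists (idx x) => //; rewrite E xn.
rewrite !inE => /orP [] /eqP xe; apply/orP; right; apply/orP.
  by left; apply/lower_mem; exists b, (idx x) => //; rewrite E xe.
by right; apply/upper_mem; exists a, (idx x) => //; rewrite E xe.
Qed.

Lemma disj x : lower_reg W x -> upper_reg W x -> False.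
Proof.
move=> /lower_mem [t [j1 l1 E1]] /upper_mem [s [j2 l2 E2]].
have [h1 _] := PE_idx l1 E1; have [_ h2] := PE_idx l2 E2.
have P1 : PE x t by exists j1.
move: E2; rewrite -h2 h1 E1 => [[xs tx]].
by move: (PE_proper P1); rewrite tx properxx.
Qed.

Lemma rank x y : x \in K -> y \in bd K x -> idx y <= idx x /\ (idx y = idx x -> PE y x).
Proof.
move=> xK; rewrite inE => /andP [yK /andP [yx _]].
have [_ cx] := complex_at xK.
have xl : idx x < size W by rewrite -memK.
have yK' : y \in Kpref W (idx x).+1.
  apply: cx (proper_sub yx) _; first by rewrite memKpref.
  by apply/negP => /eqP y0; move: yK; rewrite y0; apply/negP; apply: set0K.
rewrite memKpref // ltnS in yK'; split => // e.
have ya := nth_idx yK; rewrite e in ya; have xa := nth_idx xK.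
have [_ ok] := (proj1 HM) _ xl.
move: ya xa ok; case E: (nthW (idx x)) => [n|a b] /=.
  by rewrite !inE => /eqP ye /eqP xe; rewrite ye xe properxx in yx.
rewrite !inE => /orP [] /eqP ye /orP [] /eqP xe [ab _].
- by rewrite ye xe properxx in yx.
- by rewrite ye xe; exists (idx x).
- by rewrite ye xe in yx; have := proper_trans ab yx; rewrite properxx.
- by rewrite ye xe properxx in yx.
Qed.

End Concrete.
Unset Implicit Arguments.

Theorem corollary2 (V : finType) (K : {set {set V}}) (W : seq (step V))
  (f g : {set V} -> {set {set V}}) :
  morse_seq K W ->
  is_reference K W f ->
  is_coreference K W g ->
  forall (p : nat) (c : {set {set V}}),
    (Obar K W g p c <-> (c \subset skel K p /\ stab (flow K W) c c)) /\
    (Ounder K W f p c <-> (c \subset skel K p /\ stab (coflow K W) c c)).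
Proof.
move=> HM [f1 [f2 f3]] [g1 [g2 g3]] p c.
have bdK : forall x y, y \in bd K x -> y \in K by move=> x y; rewrite inE => /andP [].
have cobdK : forall x y, y \in cobd K x -> y \in K by move=> x y; rewrite inE => /andP [].
have HBC : forall x y, x \in K -> y \in K -> (y \in bd K x) = (x \in cobd K y).
  by move=> x y xK yK; rewrite !inE xK yK.
have PEK := PE_K HM.
have Hpart := part HM.
have H0 := set0K HM.
split.
- apply: (abstract_main (r := idx W) bdK cobdK HBC _ _ _ _ _ _ Hpart _ _ H0 g1 g2 g3).
  + move=> s t /Vmap_mem P; have [sK tK] := PEK _ _ P.
    split => //.
    * by apply/lower_mem; exists t.
    * by apply/upper_mem; exists s.
    * exact: (PE_bd HM P).
  + move=> s t /Vmap_mem [j jlt E]; have [h1 h2] := PE_idx HM jlt E.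
    by rewrite h1 h2.
  + by move=> s _ /lower_mem [t P]; exists t; apply/Vmap_mem.
  + by move=> t _ /upper_mem [s P]; exists s; apply/Vmap_mem.
  + by move=> s t t' /Vmap_mem P1 /Vmap_mem P2; apply: (PE_uniq1 HM) P1 P2.
  + by move=> s s' t /Vmap_mem P1 /Vmap_mem P2; apply: (PE_uniq2 HM) P1 P2.
  + by move=> x _; apply: (disj HM).
  + move=> x y xK yB; have [h1 h2] := rank HM xK yB; split => // e.
    by apply/Vmap_mem; apply: h2.
- have HCB : forall x y, x \in K -> y \in K -> (y \in cobd K x) = (x \in bd K y).
    by move=> x y xK yK; rewrite HBC.
  have Hpart' : forall x, x \in K -> [|| x \in crit W, upper_reg W x | lower_reg W x].
    by move=> x /Hpart; case: (x \in crit W); case: (lower_reg W x); case: (upper_reg W x).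
  apply: (abstract_main (r := fun x => size W - idx W x)
            cobdK bdK HCB _ _ _ _ _ _ Hpart' _ _ H0 f1 f2 f3).
  + move=> s t /Vstar_mem P; have [tK sK] := PEK _ _ P.
    split => //; [apply/upper_mem; by exists t | apply/lower_mem; by exists s
                 | rewrite HCB //; exact: (PE_bd HM P)].
  + move=> s t /Vstar_mem [j jlt E]; have [h1 h2] := PE_idx HM jlt E.
    by rewrite h1 h2.
  + by move=> s _ /upper_mem [t P]; exists t; apply/Vstar_mem.
  + by move=> t _ /lower_mem [s P]; exists s; apply/Vstar_mem.
  + by move=> s t t' /Vstar_mem P1 /Vstar_mem P2; apply: (PE_uniq2 HM) P1 P2.
  + by move=> s s' t /Vstar_mem P1 /Vstar_mem P2; apply: (PE_uniq1 HM) P1 P2.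
  + by move=> x _ U L; apply: (disj HM) L U.
  + move=> x y xK yC; have yK := cobdK _ _ yC.
    rewrite HCB // in yC.
    have [h1 h2] := rank HM yK yC.
    have xl : idx W x < size W by rewrite -(memK HM).
    have yl : idx W y < size W by rewrite -(memK HM).
    split; first lia.
    by move=> e; apply/Vstar_mem; apply: h2; lia.
Qed.
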